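(* In the toy model (see context), let $S=\sum_{i=0}^{L-1}[\![\Delta\alpha_i]\!]$ and $\omega_i=\Delta\alpha_i-[\![\Delta\alpha_i]\!]$. Define an integer vector $\vec J$ by: if $S\ge0$, $J_i=1$ for the $S+1$ indices $i$ with the smallest values of $\omega_i$ and $J_i=0$ otherwise; if $S<0$, $J_i=-1$ for the $|S|-1$ indices $i$ with the largest values of $\omega_i$ and $J_i=0$ otherwise. Let $k^+\in\{0,\dots,L-1\}$ be given by $k^+\equiv\sum_{i=0}^{L-1}i\,(-[\![\Delta\alpha_i]\!]+J_i)\pmod L$. Then the almost surely unique (up to adding a common integer) threshold configuration $\vec m^+$ of the toy model satisfies $$\Delta m^+_i=-[\![\Delta\alpha_i]\!]+J_i-\delta_{ik^+}\quad\text{for all }i.$$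
   Context: Toy model: $L$ sites with periodic boundary conditions (indices mod $L$); disorder $\alpha_0,\dots,\alpha_{L-1}$ i.i.d. uniform on $(-\tfrac12,\tfrac12)$, extended periodically; $\Delta x_i=x_{i-1}-2x_i+x_{i+1}$ is the periodic discrete Laplacian; $[\![x]\!]$ denotes the integer nearest to $x$; $\delta_{ik}$ is the Kronecker delta. A configuration is $\vec m\in\mathbb Z^L$, with (rescaled, zero-force) well coordinates $z_i=\Delta m_i+\Delta\alpha_i$. A threshold configuration is a configuration $\vec m^+$ attaining $\min_{\vec m\in\mathbb Z^L}\max_i z_i$. *)

(* Defs.v *)
From HB Require Import structures.
From mathcomp Require Import all_boot all_order all_algebra.
From mathcomp Require Import reals.
Set Implicit Arguments. Unset Strict Implicit. Unset Printing Implicit Defensive.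
Import Order.TTheory GRing.Theory Num.Theory.
Local Open Scope ring_scope.

Section ToyModel.
Variable R : realType.
Variable L : nat.

Definition lapR (x : 'I_L -> R) (i : 'I_L) : R :=
  x (ord_pred i) - 2 * x i + x (ordS i).
Definition lapZ (x : 'I_L -> int) (i : 'I_L) : int :=
  x (ord_pred i) - 2 * x i + x (ordS i).

(* nearest integer [[x]]; at half-integers (a null event) we round up *)
Definition rnd (x : R) : int := Num.floor (x + 2^-1).

Definition zcoord (alpha : 'I_L -> R) (m : 'I_L -> int) (i : 'I_L) : R :=
  (lapZ m i)%:~R + lapR alpha i.

(* m is a threshold configuration: max_i z_i(m) <= max_i z_i(m') for all m'
   (i.e. m attains min_{m'} max_i z_i(m')) *)
Definition is_threshold (alpha : 'I_L -> R) (m : 'I_L -> int) : Prop :=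
  forall m' : 'I_L -> int, exists i : 'I_L, forall j : 'I_L,
    zcoord alpha m j <= zcoord alpha m' i.

Definition Ssum (alpha : 'I_L -> R) : int := \sum_(i < L) rnd (lapR alpha i).
Definition omega (alpha : 'I_L -> R) (i : 'I_L) : R :=
  lapR alpha i - (rnd (lapR alpha i))%:~R.

(* J: if S >= 0, J_i = 1 for the S+1 indices with smallest omega (i is among
   them iff fewer than S+1 indices have strictly smaller omega), else 0;
   if S < 0, J_i = -1 for the |S|-1 indices with largest omega, else 0. *)
Definition Jvec (alpha : 'I_L -> R) (i : 'I_L) : int :=
  let S := Ssum alpha in
  if 0 <= S then
    (if (#|[set j | omega alpha j < omega alpha i]|%:Z < S + 1) then 1 else 0)
  else
    (if (#|[set j | omega alpha i < omega alpha j]|%:Z < `|S|%:Z - 1) then -1 else 0).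

Definition kplus (alpha : 'I_L -> R) : int :=
  ((\sum_(i < L) (i : nat)%:Z * (- rnd (lapR alpha i) + Jvec alpha i)) %% (L : int))%Z.

Definition toy_claim (alpha : 'I_L -> R) : Prop :=
  (exists m, is_threshold alpha m) /\
  forall m, is_threshold alpha m -> forall i : 'I_L,
    lapZ m i = - rnd (lapR alpha i) + Jvec alpha i - ((i : nat)%:Z == kplus alpha)%:Z.

Definition lebesgue_null (N : ('I_L -> R) -> Prop) : Prop :=
  forall eps : R, 0 < eps ->
    exists a b : nat -> 'I_L -> R,
      (forall n i, a n i <= b n i) /\
      (forall x, N x -> exists n, forall i, a n i <= x i <= b n i) /\
      (forall n, \sum_(k < n) \prod_(i < L) (b k i - a k i) <= eps).

(* the event fails only on a null set of the disorder cube (-1/2,1/2)^L,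
   i.e. holds almost surely for i.i.d. uniform alpha_i *)
Definition almost_surely (P : ('I_L -> R) -> Prop) : Prop :=
  lebesgue_null (fun alpha => (forall i, - 2^-1 < alpha i < 2^-1) /\ ~ P alpha).

End ToyModel.

(* Main.v *)
Require Import Defs.
From HB Require Import structures.
From mathcomp Require Import all_boot all_order all_algebra.
From mathcomp Require Import reals.
From mathcomp Require Import ring lra zify.
Set Implicit Arguments. Unset Strict Implicit. Unset Printing Implicit Defensive.
Import Order.TTheory GRing.Theory Num.Theory.
Local Open Scope ring_scope.
Lemma key (R : realType) (L : nat) (om : 'I_L -> R) (w w' : 'I_L -> int)
  (k : 'I_L) (q : int) :
  (forall i, i != k -> forall j, (w j)%:~R + om j < (w i)%:~R + om i + 1) ->
  (forall j, (w j)%:~R + om j < (w k)%:~R + om k + 2) ->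
  \sum_i w' i = \sum_i w i ->
  \sum_(i < L) (i:nat)%:Z * (w' i - w i) = q * (L%:Z) ->
  (forall i, exists j, (w' i)%:~R + om i <= (w j)%:~R + om j) ->
  forall i, w' i = w i.
Proof.
move=> H1 H2 Hs Hm H3.
have le1 : forall i, i != k -> w' i <= w i.
  move=> i ik; have [j hj] := H3 i; have h := H1 i ik j.
  have : (w' i)%:~R < ((w i + 1)%:~R : R) by rewrite intrD; lra.
  rewrite ltr_int; lia.
have le2 : w' k <= w k + 1.
  have [j hj] := H3 k; have h := H2 j.
  have : (w' k)%:~R < ((w k + 2)%:~R : R) by rewrite intrD; lra.
  rewrite ltr_int; lia.
have [t tdef] : exists t : 'I_L -> int, forall i, t i = w i - w' i by exists (fun i => w i - w' i).
have St : \sum_i t i = 0.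
  by rewrite (eq_bigr _ (fun i _ => tdef i)) sumrB Hs subrr.
have tge0 : forall i, i != k -> 0 <= t i by move=> i /le1; rewrite tdef; lia.
have Sk := St; rewrite (bigD1 k) //= in Sk.
have [tk0|tk1] : 0 <= t k \/ t k = -1 by rewrite tdef; lia.
  have all0 : forall i, t i = 0.
    move=> i; apply: (@psumr_eq0P _ _ predT t) => // i' _.
    by case: (eqVneq i' k) => [->|/tge0].
  by move=> i; have := all0 i; rewrite tdef; lia.
exfalso.
have S1 : \sum_(i < L | i != k) t i = 1.
  by move: Sk; rewrite tk1 => /eqP; rewrite addrC subr_eq0 => /eqP.
have [j /andP [jk tj]] : exists j, (j != k) && (t j != 0).
  case: (pickP (fun j => (j != k) && (t j != 0))) => [j hj|hn]; first by exists j.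
  exfalso; move: S1; rewrite big1 // => i ik; have := hn i; rewrite ik /= => /negbT/negbNE/eqP.
  by [].
have S2 := S1; rewrite (bigD1 j) //= in S2.
move: S2; set r := \sum_(i < L | _) _ => S2.
have rge0 : 0 <= r by rewrite /r; apply: sumr_ge0 => i /andP [] /tge0.
have z0' : r = 0 -> forall i, (i != k) && (i != j) -> t i = 0.
  by move=> r0; apply: psumr_eq0P => // i /andP [] /tge0.
clearbody r.
have tj1 : t j = 1 by have := tge0 j jk; move: tj => /eqP tj; lia.
have z0 : forall i, (i != k) && (i != j) -> t i = 0 by apply: z0'; lia.
have : \sum_(i < L) (i:nat)%:Z * (w' i - w i) = (k:nat)%:Z - (j:nat)%:Z.
  have -> : \sum_(i < L) (i:nat)%:Z * (w' i - w i) = - \sum_(i < L) (i:nat)%:Z * t i.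
    by rewrite -sumrN; apply: eq_bigr => i _; rewrite tdef; ring.
  rewrite (bigD1 k) //= (bigD1 j) //= big1; last first.
    by move=> i /andP [ik ij]; rewrite z0 ?mulr0 // ik.
  rewrite tk1 tj1; ring.
rewrite Hm => e.
have jlt := ltn_ord j; have klt := ltn_ord k.
have jkn : (j:nat) <> (k:nat) by move=> /val_inj E; rewrite E eqxx in jk.
have [q0|[q1|q2]] : q = 0 \/ 1 <= q \/ q <= -1 by lia.
- rewrite q0 in e; lia.
- have : (L%:Z) <= q * L%:Z by rewrite -[X in X <= _]mul1r ler_wpM2r //; lia.
  lia.
- have : q * L%:Z <= - (L%:Z) by rewrite -mulN1r ler_wpM2r //; lia.
  lia.
Qed.
Section Model.
Variable R : realType.
Variable L : nat.
Implicit Types alpha : 'I_L -> R.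

Lemma sum_pred (V : zmodType) (f : 'I_L -> V) : \sum_i f (ord_pred i) = \sum_i f i.
Proof. by rewrite [RHS](reindex_inj (@ord_pred_inj L)). Qed.
Lemma sum_S (V : zmodType) (f : 'I_L -> V) : \sum_i f (ordS i) = \sum_i f i.
Proof. by rewrite [RHS](reindex_inj (@ordS_inj L)). Qed.

Lemma sum_lapR alpha : \sum_i lapR alpha i = 0.
Proof.
rewrite /lapR !big_split /= sumrN -mulr_sumr sum_pred sum_S; lra.
Qed.

Lemma sum_lapZ (m : 'I_L -> int) : \sum_i lapZ m i = 0.
Proof.
rewrite /lapZ !big_split /= sumrN -mulr_sumr sum_pred sum_S; ring.
Qed.

Lemma omega_bnd alpha i : -2^-1 <= omega alpha i < 2^-1.
Proof.
rewrite /omega /rnd; have := floor_itv (lapR alpha i + 2^-1).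
move=> /andP [h1 h2]; rewrite intrD in h2. 
apply/andP; split; lra.
Qed.

Lemma Ssum_omega alpha : (Ssum alpha)%:~R = - \sum_i omega alpha i :> R.
Proof.
rewrite /omega sumrB sum_lapR sub0r opprK /Ssum rmorph_sum //.
Qed.

Lemma sum_constL (c : R) : \sum_(i < L) c = L%:R * c.
Proof. by rewrite sumr_const card_ord mulr_natl. Qed.

Lemma Ssum_bnd alpha : 2 * Ssum alpha <= L%:Z /\ - (2 * Ssum alpha) <= L%:Z.
Proof.
have h := Ssum_omega alpha.
have h1 : \sum_i omega alpha i <= \sum_(i < L) (2^-1 : R).
  by apply: ler_sum => i _; have /andP [_ /ltW] := omega_bnd alpha i.
have h2 : \sum_(i < L) (- 2^-1 : R) <= \sum_i omega alpha i.
  by apply: ler_sum => i _; have /andP [] := omega_bnd alpha i.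
rewrite sum_constL in h1; rewrite sum_constL in h2.
move: h h1 h2; generalize (\sum_i omega alpha i) => s h h1 h2.
have eL : ((L%:Z)%:~R : R) = L%:R by [].
have e2 : ((2:int)%:~R : R) = 2 by [].
split; rewrite -(ler_int R) ?intrN intrM h eL e2; lra.
Qed.
Lemma card_lt (N : nat) : (N <= L)%N -> #|[set t : 'I_L | (t < N)%N]| = N.
Proof.
move=> hN; rewrite -sum1_card.
rewrite (eq_bigl (fun t : 'I_L => (t < N)%N)); last by move=> t; rewrite inE.
by rewrite -(big_ord_widen_cond _ (fun _ => true) (fun _ => 1%N) hN) /= sum1_card card_ord.
Qed.

Lemma rank_card (f : 'I_L -> R) (finj : injective f) (N : nat) :
  (N <= L)%N -> #|[set i | (#|[set j | (f j < f i)%R]| < N)%N]| = N.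
Proof.
move=> hN.
pose rk i := #|[set j | (f j < f i)%R]|.
have rklt : forall i, (rk i < L)%N.
  move=> i; rewrite /rk -[X in (_ < X)%N](card_ord L); apply: proper_card.
  apply/properP; split; first by apply/subsetP => x; rewrite inE.
  by exists i; rewrite ?inE // ltxx.
pose rko i : 'I_L := Ordinal (rklt i).
have rkinj : injective rko.
  move=> i j /(congr1 val) /= e; apply/eqP/negPn/negP => ij.
  have fij : f i != f j by apply: contra ij => /eqP /finj ->.
  wlog lt : i j e ij fij / f i < f j.
    move=> H; case: (ltgtP (f i) (f j)) => [h|h|h]; first exact: (H i j).
    - by apply: (H j i) => //; rewrite eq_sym.
    - by rewrite h eqxx in fij.
  have : (rk i < rk j)%N; last by move: e; rewrite /rk => ->; rewrite ltnn.
  apply: proper_card; apply/properP; split.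
    by apply/subsetP => x; rewrite !inE => h; apply: lt_trans h lt.
  by exists i; rewrite !inE ?lt // ltxx.
rewrite -[RHS](card_lt hN) -[RHS](card_preimset _ rkinj).
by apply: eq_card => i; rewrite !inE.
Qed.
Lemma sum_if (P : pred 'I_L) : \sum_i (if P i then 1 else 0 : int) = #|[set i | P i]|%:Z.
Proof.
rewrite -big_mkcond sumr_const -natz; congr (_%:R).
by apply: eq_card => i; rewrite inE.
Qed.

Lemma Jvec_pos alpha i : 0 <= Ssum alpha -> Jvec alpha i =
  if (#|[set j | omega alpha j < omega alpha i]|%:Z < Ssum alpha + 1) then 1 else 0.
Proof. by rewrite /Jvec /= => ->. Qed.

Lemma Jvec_neg alpha i : Ssum alpha < 0 -> Jvec alpha i =
  if (#|[set j | omega alpha i < omega alpha j]|%:Z < `|Ssum alpha|%:Z - 1) then -1 else 0.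
Proof. by rewrite /Jvec /= => /lt_geF ->. Qed.

Lemma Jsum alpha : (0 < L)%N -> injective (omega alpha) ->
  \sum_i Jvec alpha i = Ssum alpha + 1.
Proof.
move=> hL inj; have [b1 b2] := Ssum_bnd alpha.
case: (leP 0 (Ssum alpha)) => hS.
  rewrite (eq_bigr _ (fun i _ => Jvec_pos i hS)) sum_if.
  have [n en] : exists n : nat, Ssum alpha = n%:Z by exists `|Ssum alpha|%N; lia.
  rewrite en in b1 b2 *.
  rewrite (eq_card (B := [set i | (#|[set j | (omega alpha j < omega alpha i)%R]| < n.+1)%N])); last first.
    by move=> i; rewrite !inE; apply/idP/idP; lia.
  rewrite rank_card //; lia.
rewrite (eq_bigr _ (fun i _ => Jvec_neg i hS)).
rewrite (eq_bigr (fun i => - (if (#|[set j | (omega alpha i < omega alpha j)%R]| < `|Ssum alpha| - 1)%N then 1 else 0))); last first.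
  move=> i _; case: ifP; case: ifP => //; lia.
rewrite sumrN sum_if.
have injN : injective (fun i => - omega alpha i) by move=> i j /oppr_inj /inj.
rewrite (eq_card (B := [set i | (#|[set j | (- omega alpha j < - omega alpha i)%R]| < `|Ssum alpha| - 1)%N])); last first.
  move=> i; rewrite !inE; congr (_ < _)%N; apply: eq_card => j; by rewrite !inE ltrN2.
rewrite (rank_card injN); lia.
Qed.
Lemma Jspread alpha i j :
  (Jvec alpha j)%:~R + omega alpha j < (Jvec alpha i)%:~R + omega alpha i + 1.
Proof.
have e1 : ((1:int)%:~R : R) = 1 by [].
have e0 : ((0:int)%:~R : R) = 0 by [].
have em1 : ((-1:int)%:~R : R) = -1 by rewrite intrN.
have := omega_bnd alpha i; have := omega_bnd alpha j => /andP [j1 j2] /andP [i1 i2].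
case: (leP 0 (Ssum alpha)) => hS.
  rewrite !Jvec_pos //.
  case: ifP => hj; case: ifP => hi; rewrite ?e1 ?e0; try lra.
  case: (ltP (omega alpha j) (omega alpha i)) => h; first lra.
  have : (#|[set x | (omega alpha x < omega alpha i)%R]| <= #|[set x | (omega alpha x < omega alpha j)%R]|)%N.
    by apply: subset_leq_card; apply/subsetP => x; rewrite !inE => hx; apply: lt_le_trans hx h.
  move: hi hj => /negbT; lia.
rewrite !Jvec_neg //.
case: ifP => hj; case: ifP => hi; rewrite ?em1 ?e0; try lra.
case: (ltP (omega alpha j) (omega alpha i)) => h; first lra.
have : (#|[set x | (omega alpha j < omega alpha x)%R]| <= #|[set x | (omega alpha i < omega alpha x)%R]|)%N.
  by apply: subset_leq_card; apply/subsetP => x; rewrite !inE => hx; apply: le_lt_trans h hx.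
move: hi hj => hi /negbT hj; lia.
Qed.
End Model.
Lemma valS n (i : 'I_n.+1) : val (ordS i) = if (i < n)%N then i.+1 else 0%N.
Proof.
rewrite /=; case: ltnP => h; first by rewrite modn_small.
have -> : (i : nat) = n by have := ltn_ord i; lia.
by rewrite modnn.
Qed.

Lemma valP n (i : 'I_n.+1) : val (ord_pred i) = if (0 < i)%N then i.-1 else n.
Proof.
rewrite /=; case: ifP => h.
  have -> : (i + n.+1).-1 = i.-1 + n.+1 by lia.
  by rewrite modnDr modn_small //; have := ltn_ord i; lia.
have -> : (i : nat) = 0%N by lia.
by rewrite add0n /= modn_small.
Qed.

Lemma lapZ_mod (L : nat) (m : 'I_L -> int) :
  exists q : int, \sum_(i < L) (i:nat)%:Z * lapZ m i = q * L%:Z.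
Proof.
case: L m => [|n] m; first by exists 0; rewrite big_ord0 mul0r.
pose c (j : 'I_n.+1) : int :=
  if (j < n)%N then (if (0 < j)%N then 0 else 1) else (if (0 < j)%N then -1 else 0).
have hc : forall j : 'I_n.+1,
  ((ordS j : nat)%:Z + (ord_pred j : nat)%:Z - 2 * (j:nat)%:Z) = c j * (n.+1)%:Z.
  move=> j; rewrite valS valP /c; have := ltn_ord j.
  case: ifP => h1; case: ifP => h2; lia.
exists (\sum_j c j * m j).
rewrite mulr_suml.
have -> : \sum_(i < n.+1) (i:nat)%:Z * lapZ m i =
  \sum_(i < n.+1) ((ordS i : nat)%:Z + (ord_pred i : nat)%:Z - 2 * (i:nat)%:Z) * m i.
  rewrite /lapZ.
  have e1 : \sum_(i < n.+1) (i:nat)%:Z * m (ord_pred i) = \sum_(i < n.+1) (ordS i : nat)%:Z * m i.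
    rewrite (reindex_inj (@ordS_inj n.+1)) /=; apply: eq_bigr => i _; by rewrite ordSK.
  have e2 : \sum_(i < n.+1) (i:nat)%:Z * m (ordS i) = \sum_(i < n.+1) (ord_pred i : nat)%:Z * m i.
    rewrite (reindex_inj (@ord_pred_inj n.+1)) /=; apply: eq_bigr => i _; by rewrite ord_predK.
  have e3 : \sum_(i < n.+1) (i:nat)%:Z * (m (ord_pred i) - 2 * m i + m (ordS i)) =
    \sum_(i < n.+1) (i:nat)%:Z * m (ord_pred i) + \sum_(i < n.+1) (i:nat)%:Z * m (ordS i)
    - \sum_(i < n.+1) 2 * (i:nat)%:Z * m i.
    by rewrite -!big_split -sumrB /=; apply: eq_bigr => i _; ring.
  rewrite e3 e1 e2 -!big_split -sumrB /=; apply: eq_bigr => i _; ring.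
apply: eq_bigr => i _; rewrite hc; ring.
Qed.
Lemma sumD_aux (V : nat -> int) (N : nat) :
  \sum_(t < N) (\sum_(s < t.+1) V s) + \sum_(s < N) (s:nat)%:Z * V s
  = N%:Z * \sum_(s < N) V s.
Proof.
elim: N => [|N IH]; first by rewrite !big_ord0 mul0r addr0.
rewrite !big_ord_recr /=.
move: IH; set A := \sum_(i < N) _; set B := \sum_(i < N) _; set C := \sum_(i < N) _.
move=> IH; have -> : (N.+1)%:Z = N%:Z + 1 by rewrite -addn1 PoszD.
have -> : A + (C + V N) + (B + N%:Z * V N) = (A + B) + C + V N + N%:Z * V N by ring.
rewrite IH; ring.
Qed.

Lemma preimage (n : nat) (v : 'I_n.+1 -> int) (q : int) :
  \sum_i v i = 0 -> \sum_(i < n.+1) (i:nat)%:Z * v i = q * (n.+1)%:Z ->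
  exists m : 'I_n.+1 -> int, forall i, lapZ m i = v i.
Proof.
move=> S0 S1.
pose V (t : nat) := v (inord t).
pose D (t : nat) := \sum_(s < t.+1) V s.
pose d (t : nat) := D t + q.
pose M (k : nat) := \sum_(s < k) d s.
have SV : \sum_(s < n.+1) V s = 0.
  by rewrite -[RHS]S0; apply: eq_bigr => i _; rewrite /V inord_val.
have SsV : \sum_(s < n.+1) (s:nat)%:Z * V s = q * (n.+1)%:Z.
  by rewrite -[RHS]S1; apply: eq_bigr => i _; rewrite /V inord_val.
have Sd : \sum_(s < n.+1) d s = 0.
  have := sumD_aux V n.+1; rewrite SV SsV mulr0 => h.
  rewrite /d big_split /= sumr_const card_ord.
  have -> : \sum_(i < n.+1) D i = - (q * (n.+1)%:Z) by rewrite /D; move: h; set X := \sum_(t < n.+1) _ => h; lia.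
  rewrite -mulr_natr; ring.
have L1 : forall i : 'I_n.+1, M (ordS i) - M i = d i.
  move=> i; rewrite valS; case: ifP => h.
    by rewrite /M big_ord_recr /=; ring.
  have ei : (i : nat) = n by have := ltn_ord i; lia.
  rewrite ei /M big_ord0.
  move: Sd; rewrite big_ord_recr /= => /eqP; rewrite addr_eq0 => /eqP ->.
  by rewrite sub0r opprK.
have L2 : forall i : 'I_n.+1, d i - d (ord_pred i) = v i.
  move=> i; rewrite valP; case: ifP => h.
    have -> : (i : nat) = (i.-1).+1 by lia.
    rewrite /d /D [in X in X - _]big_ord_recr /=.
    have -> : V i.-1.+1 = v i by rewrite /V; congr v; apply: val_inj; rewrite /= inordK; have := ltn_ord i; lia.
    ring.
  have ei : (i : nat) = 0%N by lia.
  rewrite /d /D ei SV big_ord1 /V.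
  have -> : inord 0 = i by apply: val_inj; rewrite /= inordK.
  ring.
exists (fun i => M i) => i.
rewrite /lapZ.
have e := L1 (ord_pred i); rewrite ord_predK in e.
have := L1 i; have := L2 i; lia.
Qed.
Lemma exists_max (R : realType) (n : nat) (f : 'I_n.+1 -> R) :
  exists i0, forall i, f i <= f i0.
Proof.
case: (@arg_maxP _ _ _ ord0 predT f isT) => i0 _ H.
by exists i0 => i; apply: H.
Qed.

Lemma claim_det (R : realType) (L : nat) (alpha : 'I_L -> R) :
  (0 < L)%N -> injective (omega alpha) -> toy_claim alpha.
Proof.
case: L alpha => [//|n] alpha _ inj.
set L := n.+1.
have hL : (0 < L)%N by [].
have hk0 : 0 <= kplus alpha by apply: modz_ge0.
have hkL : kplus alpha < L%:Z by apply: ltz_pmod.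
have [k ek] : exists k : 'I_L, (k:nat)%:Z = kplus alpha.
  have h : (`|kplus alpha| < L)%N by lia.
  by exists (Ordinal h) => /=; lia.
have vk : forall i : 'I_L, ((i:nat)%:Z == kplus alpha) = (i == k).
  by move=> i; rewrite -ek eqz_nat.
pose r i := rnd (lapR alpha i).
pose v i := - r i + Jvec alpha i - ((i:nat)%:Z == kplus alpha)%:Z.
pose w i := Jvec alpha i - (i == k)%:Z.
have vw : forall i, v i + r i = w i by move=> i; rewrite /v /w vk; ring.
have sumk : \sum_(i < L) ((i == k) : int) = 1.
  by rewrite (bigD1 k) //= eqxx big1 ?addr0 // => i /negbTE ->.
have sumik : \sum_(i < L) (i:nat)%:Z * ((i == k) : int) = (k:nat)%:Z.
  by rewrite (bigD1 k) //= eqxx big1 ?addr0 ?mulr1 // => i /negbTE ->; rewrite mulr0.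
have Jsm := Jsum hL inj.
have Sw : \sum_i w i = Ssum alpha.
  by rewrite /w sumrB Jsm sumk; ring.
have Sv : \sum_i v i = 0.
  rewrite /v (eq_bigr (fun i : 'I_L => - r i + Jvec alpha i - ((i == k) : int))); last by move=> i _; rewrite vk.
  by rewrite sumrB big_split /= sumrN Jsm sumk /Ssum /r; ring.
set c := \sum_(i < L) (i:nat)%:Z * (- rnd (lapR alpha i) + Jvec alpha i).
have Smv : \sum_(i < L) (i:nat)%:Z * v i = (c %/ L%:Z)%Z * L%:Z.
  rewrite /v (eq_bigr (fun i : 'I_L => (i:nat)%:Z * (- r i + Jvec alpha i) - (i:nat)%:Z * ((i == k) : int)));
    last by move=> i _; rewrite vk; ring.
  rewrite sumrB sumik ek /kplus -/c.
  by rewrite {1}(divz_eq c L%:Z) /L; ring.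
have [m0 hm0] := preimage Sv Smv.
pose om := omega alpha.
have zeq : forall (m : 'I_L -> int) i,
    zcoord alpha m i = ((lapZ m i + r i)%:~R) + om i.
  by move=> m i; rewrite /zcoord /om /omega /r intrD; ring.
have z0 : forall i, zcoord alpha m0 i = (w i)%:~R + om i.
  by move=> i; rewrite zeq hm0 vw.
have H1 : forall i, i != k -> forall j, (w j)%:~R + om j < (w i)%:~R + om i + 1.
  move=> i ik j; rewrite /w (negbTE ik) subr0.
  have := Jspread alpha i j; rewrite /om.
  have : ((Jvec alpha j - (j == k)%:Z)%:~R : R) <= (Jvec alpha j)%:~R.
    by rewrite ler_int; case: (j == k); lia.
  lra.
have H2 : forall j, (w j)%:~R + om j < (w k)%:~R + om k + 2.
  move=> j; have h1 := Jspread alpha k j.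
  have h2 : ((w j)%:~R : R) <= (Jvec alpha j)%:~R by rewrite ler_int /w; case: (j == k); lia.
  have h3 : ((w k)%:~R : R) = (Jvec alpha k)%:~R - 1 by rewrite /w eqxx intrB.
  rewrite h3 /om; lra.
have KEY : forall m : 'I_L -> int,
    (forall i, exists j, zcoord alpha m i <= (w j)%:~R + om j) ->
    forall i, lapZ m i + r i = w i.
  move=> m hm.
  have [q1 hq1] := lapZ_mod m.
  apply: (@key R L om w (fun i => lapZ m i + r i) k (q1 - (c %/ L%:Z)%Z)) => //.
  - by rewrite big_split /= sum_lapZ add0r.
  - rewrite (eq_bigr (fun i : 'I_L => (i:nat)%:Z * lapZ m i - (i:nat)%:Z * v i)); last first.
      by move=> i _; rewrite -vw; ring.
    by rewrite sumrB hq1 Smv; ring.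
  - by move=> i; have [j hj] := hm i; exists j; rewrite -zeq.
split.
  exists m0 => m'.
  have [i0 hi0] := exists_max (zcoord alpha m').
  exists i0.
  case: (boolP [forall j, zcoord alpha m0 j <= zcoord alpha m' i0]) => [/forallP //|].
  move=> /forallPn [j]; rewrite -ltNge => hj.
  have hlt : zcoord alpha m' i0 < (w j)%:~R + om j by rewrite -z0.
  have e := KEY m' (fun i => ex_intro _ j (le_trans (hi0 i) (ltW hlt))).
  have := hi0 j; rewrite zeq e -z0 => b.
  by have := lt_le_trans hj b; rewrite ltxx.
move=> m hm i.
have [i1 hi1] := hm m0.
have hb : forall j, zcoord alpha m j <= (w i1)%:~R + om i1 by move=> j; rewrite -z0.
have e := KEY m (fun j => ex_intro _ i1 (hb j)) i.
rewrite vk; move: e; rewrite /w /r => e; rewrite -addrA -e; ring.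
Qed.
Lemma sum_trunc (R : realType) (F : nat -> R) (M n : nat) :
  (forall k, 0 <= F k) -> (forall k, (M <= k)%N -> F k = 0) ->
  \sum_(k < n) F k <= \sum_(k < M) F k.
Proof.
move=> F0 FM; rewrite -(big_mkord xpredT F) -(big_mkord xpredT F).
case: (leqP n M) => h.
  rewrite (big_cat_nat (leq0n n) h) /= lerDl; exact: sumr_ge0.
rewrite (big_cat_nat (leq0n M) (ltnW h)) /=.
have -> : \sum_(M <= i < n) F i = 0.
  by rewrite big_nat_cond big1 // => k /andP [/andP [hk _] _]; apply: FM.
by rewrite addr0.
Qed.

Lemma vol_ge0 (R : realType) (L : nat) (a b : 'I_L -> R) :
  (forall i, a i <= b i) -> 0 <= \prod_i (b i - a i).
Proof. by move=> h; apply: prodr_ge0 => i _; rewrite subr_ge0. Qed.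

Lemma null_sub (R : realType) (L : nat) (N M : ('I_L -> R) -> Prop) :
  (forall x, N x -> M x) -> lebesgue_null M -> lebesgue_null N.
Proof.
move=> NM HM eps he; have [a [b [h1 [h2 h3]]]] := HM eps he.
by exists a, b; split => //; split => // x /NM /h2.
Qed.

Lemma null_empty (R : realType) (L : nat) : (0 < L)%N ->
  lebesgue_null (fun _ : 'I_L -> R => False).
Proof.
move=> hL eps he; exists (fun _ _ => 0), (fun _ _ => 0); split => //; split => // n.
rewrite big1 ?ltW // => k _; rewrite subrr prodr_const card_ord expr0n.
by case: L hL.
Qed.

Lemma null_union (R : realType) (L : nat) (N1 N2 : ('I_L -> R) -> Prop) :
  lebesgue_null N1 -> lebesgue_null N2 -> lebesgue_null (fun x => N1 x \/ N2 x).
Proof.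
move=> H1 H2 eps he.
have he2 : 0 < eps / 2 by lra.
have [a1 [b1 [p1 [c1 s1]]]] := H1 _ he2.
have [a2 [b2 [p2 [c2 s2]]]] := H2 _ he2.
exists (fun n => if odd n then a2 n./2 else a1 n./2), (fun n => if odd n then b2 n./2 else b1 n./2).
split; [|split].
- by move=> n i; case: ifP.
- move=> x [/c1 [n hn]|/c2 [n hn]].
    by exists n.*2; rewrite odd_double doubleK.
  by exists n.*2.+1; rewrite /= odd_double /= uphalf_double.
move=> n.
pose F k := \prod_i ((if odd k then b2 k./2 else b1 k./2) i - (if odd k then a2 k./2 else a1 k./2) i).
have F0 : forall k, 0 <= F k by move=> k; rewrite /F; case: ifP => _; apply: vol_ge0.
have E : forall m, \sum_(k < m.*2) F k =
   \sum_(k < m) \prod_i (b1 k i - a1 k i) + \sum_(k < m) \prod_i (b2 k i - a2 k i).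
  elim=> [|m IH]; first by rewrite !big_ord0 addr0.
  rewrite doubleS !big_ord_recr /= IH /F /= odd_double /= doubleK.
  rewrite uphalf_double; lra.
suff h : \sum_(k < n) F k <= eps by [].
have hle : \sum_(k < n) F k <= \sum_(k < n.*2) F k.
  rewrite -(big_mkord xpredT F) -(big_mkord xpredT F).
  rewrite (big_cat_nat (leq0n n) (_ : (n <= n.*2)%N)) /=.
    by rewrite lerDl; apply: sumr_ge0.
  by rewrite -addnn leq_addl.
apply: le_trans hle _.
rewrite E; have := s1 n; have := s2 n; lra.
Qed.

Lemma null_list (R : realType) (L : nat) (hL : (0 < L)%N) (T : eqType)
  (N : T -> ('I_L -> R) -> Prop) (s : seq T) :
  (forall t, t \in s -> lebesgue_null (N t)) ->
  lebesgue_null (fun x => exists t, t \in s /\ N t x).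
Proof.
elim: s => [|t s IH] H.
  refine (@null_sub R L _ _ _ (@null_empty R L hL)).
  by move=> x [t []].
have Ht : t \in t :: s by rewrite in_cons eqxx.
have Hs : forall u, u \in s -> lebesgue_null (N u) by move=> u hu; apply: H; rewrite in_cons hu orbT.
refine (@null_sub R L _ _ _ (null_union (H t Ht) (IH Hs))).
move=> x [u []]; rewrite in_cons => /orP [/eqP ->|hu] hx; first by left.
by right; exists u.
Qed.
Lemma hyper_null (R : realType) (L : nat) (hL : (0 < L)%N) (c : 'I_L -> R) (p : 'I_L) (d : R) :
  c p != 0 ->
  lebesgue_null (fun x : 'I_L -> R => (forall i, -2^-1 < x i < 2^-1) /\ \sum_i c i * x i = d).
Proof.
move=> cp eps heps.
have cp0 : 0 < `|c p| by rewrite normr_gt0.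
pose K := (\sum_i `|c i|) / `|c p|.
have K0 : 0 <= K by apply: divr_ge0 => //; apply: sumr_ge0 => i _.
pose n := Num.trunc (2 * K / eps).
pose N := n.+1.
have N0 : (0 : R) < N%:R by rewrite ltr0n.
pose h : R := N%:R^-1.
have h0 : 0 < h by rewrite invr_gt0.
have Nh : N%:R * h = 1 by rewrite mulfV // gt_eqF.
have hN : 2 * K * h <= eps.
  have := trunc_itv (divr_ge0 (mulr_ge0 (ler0n R 2) K0) (ltW heps)) => /andP [_ h2].
  rewrite -/n in h2.
  have h3 : 2 * K < N%:R * eps by rewrite -ltr_pdivrMr.
  by rewrite /h ler_pdivrMr //; nra.
pose T := {ffun 'I_L -> 'I_N}.
pose corner (g : T) (i : 'I_L) : R := -2^-1 + (g i : nat)%:R * h.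
pose y (g : T) : R := (d - \sum_(q | q != p) c q * corner g q) / c p.
pose wd (i : 'I_L) (j : 'I_N) : R := if i == p then (if (j : nat) == 0%N then 2 * K * h else 0) else h.
have wd0 : forall i j, 0 <= wd i j.
  move=> i j; rewrite /wd; case: ifP => _; last exact: ltW.
  case: ifP => _ //; apply: mulr_ge0; [apply: mulr_ge0 => // | exact: ltW].
pose A (g : T) (i : 'I_L) : R := if i == p then y g - K * h else corner g i.
pose B (g : T) (i : 'I_L) : R := A g i + wd i (g i).
pose s := enum T.
pose g0 : T := [ffun => ord0].
exists (fun k => if (k < size s)%N then A (nth g0 s k) else (fun _ => 0)).
exists (fun k => if (k < size s)%N then B (nth g0 s k) else (fun _ => 0)).
split; [|split].
- move=> k i; case: ifP => _ //; rewrite /B lerDl; exact: wd0.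
- move=> x [cube hx].
  pose idx (t : R) : 'I_N := inord (Num.trunc ((t + 2^-1) * N%:R)).
  have idxP : forall t, -2^-1 < t < 2^-1 ->
      0 <= t - (-2^-1 + (idx t : nat)%:R * h) <= h.
    move=> t /andP [t1 t2].
    have tp : 0 <= (t + 2^-1) * N%:R by apply: mulr_ge0; [lra | exact: ltW].
    have := trunc_itv tp => /andP [u1 u2].
    have tl : (Num.trunc ((t + 2^-1) * N%:R) < N)%N.
      by rewrite truncn_lt_nat // -[X in _ < X]mul1r ltr_pM2r //; lra.
    rewrite /idx inordK //.
    move: u1 u2; set tr := Num.trunc _ => u1 u2.
    rewrite -[tr.+1%:R]natr1 in u2.
    apply/andP; split; nra.
  pose g : T := [ffun i => if i == p then ord0 else idx (x i)].
  exists (index g s).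
  have gs : g \in s by rewrite /s mem_enum.
  rewrite index_mem gs nth_index // => i.
  have Hx : forall q, q != p -> 0 <= x q - corner g q <= h.
    by move=> q qp; rewrite /corner ffunE (negbTE qp); apply: idxP.
  rewrite /B /A; case: (eqVneq i p) => [->|ip]; last first.
    rewrite /wd (negbTE ip); have := Hx i ip; lra.
  rewrite /wd ffunE !eqxx /=.
  pose E := \sum_(q | q != p) c q * (x q - corner g q).
  have hE : `|E| <= (\sum_i `|c i|) * h.
    apply: le_trans (ler_norm_sum _ _ _) _.
    apply: (@le_trans _ _ (\sum_(q | q != p) `|c q| * h)).
      apply: ler_sum => q qp; rewrite normrM; apply: ler_wpM2l => //.
      by have := Hx q qp => /andP [e1 e2]; rewrite ger0_norm.
    rewrite -mulr_suml; apply: ler_wpM2r; first exact: ltW.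
    by rewrite [X in _ <= X](bigD1 p) //= lerDr.
  have hd := hx; rewrite (bigD1 p) //= in hd.
  have hy : c p * (x p - y g) = - E.
    rewrite mulrBr /y [c p * (_ / _)]mulrC divfK //.
    have eE : E = \sum_(q | q != p) c q * x q - \sum_(q | q != p) c q * corner g q.
      by rewrite /E -sumrB; apply: eq_bigr => q _; rewrite mulrBr.
    rewrite eE -hd; ring.
  have hy2 : `|x p - y g| <= K * h.
    have : `|c p| * `|x p - y g| <= (\sum_i `|c i|) * h by rewrite -normrM hy normrN.
    rewrite /K => h1; rewrite mulrAC ler_pdivlMr //; lra.
  move: hy2; rewrite ler_norml => /andP [z1 z2].
  apply/andP; split; lra.
- move=> m.
  pose F k := \prod_(i < L) ((if (k < size s)%N then B (nth g0 s k) else (fun _ => 0)) i -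
        (if (k < size s)%N then A (nth g0 s k) else (fun _ => 0)) i).
  rewrite -/(\sum_(k < m) F k).
  have F0 : forall k, 0 <= F k.
    move=> k; rewrite /F; case: ifP => _; apply: vol_ge0 => // i.
    by rewrite /B lerDl.
  have FM : forall k, (size s <= k)%N -> F k = 0.
    move=> k hk; rewrite /F; have -> : (k < size s)%N = false by rewrite ltnNge hk.
    rewrite (eq_bigr (fun _ => 0)); last by move=> i _; rewrite subrr.
    by rewrite prodr_const card_ord expr0n; move: hL; rewrite lt0n => /negbTE ->.
  apply: le_trans (sum_trunc m F0 FM) _.
  pose V (g : T) := \prod_i wd i (g i).
  have e1 : \sum_(k < size s) F k = \sum_(g <- s) V g.
    rewrite (big_nth g0) big_mkord; apply: eq_bigr => k _.
    rewrite /F ltn_ord; apply: eq_bigr => i _; rewrite /B addrAC subrr add0r //.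
  rewrite e1 /s big_enum /= -bigA_distr_bigA /=.
  rewrite (bigD1 p) //= [X in _ * X]big1 ?mulr1; last first.
    move=> i ip; rewrite /wd (negbTE ip) sumr_const card_ord -mulr_natl; exact: Nh.
  by rewrite big_ord_recl /wd eqxx /= big1 ?addr0.
Qed.

Definition delta (R : realType) (L : nat) (q : 'I_L) : 'I_L -> R := fun t => (t == q)%:R.

Lemma sum_delta (R : realType) (L : nat) (a : 'I_L) (x : 'I_L -> R) :
  \sum_q (a == q)%:R * x q = x a.
Proof.
rewrite (bigD1 a) //= eqxx mul1r big1 ?addr0 // => q qa.
by rewrite eq_sym (negbTE qa) mul0r.
Qed.

Lemma lapR_lin (R : realType) (L : nat) (x : 'I_L -> R) i :
  \sum_q lapR (@delta R L q) i * x q = lapR x i.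
Proof.
rewrite /lapR /delta.
rewrite (eq_bigr (fun q => (ord_pred i == q)%:R * x q - 2 * ((i == q)%:R * x q)
   + (ordS i == q)%:R * x q)); last by move=> q _; ring.
by rewrite big_split /= sumrB -mulr_sumr !sum_delta.
Qed.

Lemma ordS_neq (n : nat) (i j : 'I_n.+1) : i != j -> ordS i != i.
Proof.
move=> ij; apply/negP => /eqP /(congr1 val); rewrite valS.
have := ltn_ord i; have := ltn_ord j.
case: ifP => h hj hi; rewrite /= => e.
  lia.
have ei : (i : nat) = 0%N by lia.
have ej : (j : nat) = 0%N by lia.
by move: ij; rewrite -val_eqE /= ei ej.
Qed.

Lemma ord_pred_neq (n : nat) (i j : 'I_n.+1) : i != j -> ord_pred i != i.
Proof.
move=> ij; apply/negP => /eqP /(congr1 val); rewrite valP.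
have := ltn_ord i; have := ltn_ord j.
case: ifP => h hj hi; rewrite /= => e.
  lia.
have ei : (i : nat) = 0%N by lia.
have ej : (j : nat) = 0%N by lia.
by move: ij; rewrite -val_eqE /= ei ej.
Qed.

Definition coef (R : realType) (L : nat) (i j : 'I_L) (q : 'I_L) : R :=
  lapR (@delta R L q) i - lapR (@delta R L q) j.

Lemma coef_lin (R : realType) (L : nat) (i j : 'I_L) (x : 'I_L -> R) :
  \sum_q @coef R L i j q * x q = lapR x i - lapR x j.
Proof.
rewrite -(lapR_lin x i) -(lapR_lin x j) -sumrB; apply: eq_bigr => q _.
by rewrite /coef mulrBl.
Qed.

Lemma coef_nz (R : realType) (n : nat) (i j : 'I_n.+1) : i != j -> @coef R _ i j i != 0.
Proof.
move=> ij; rewrite /coef /lapR /delta eqxx (negbTE (ordS_neq ij)) (negbTE (ord_pred_neq ij)).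
have ji : (j == i) = false by rewrite eq_sym (negbTE ij).
rewrite ji.
have b1 : (0 : R) <= (ord_pred j == i)%:R by apply: ler0n.
have b2 : (0 : R) <= (ordS j == i)%:R by apply: ler0n.
apply/negP => /eqP e.
move: b1 b2 e; set u := (ord_pred j == i)%:R; set v := (ordS j == i)%:R => b1 b2 e.
have e0 : ((false : nat)%:R : R) = 0 by [].
have e1 : ((true : nat)%:R : R) = 1 by [].
rewrite e0 e1 in e; lra.
Qed.

Lemma rnd_bnd (R : realType) (x : R) : -2 < x < 2 -> -2 <= rnd x <= 2.
Proof.
move=> /andP [x1 x2]; rewrite /rnd.
have /andP [f1 f2] := floor_itv (x + 2^-1).
rewrite intrD in f2.
have a : (Num.floor (x + 2^-1))%:~R < ((3 : int)%:~R : R).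
  have e3 : ((3 : int)%:~R : R) = 3 by [].
  rewrite e3; lra.
have b : ((-3 : int)%:~R : R) < (Num.floor (x + 2^-1))%:~R.
  have e3 : ((-3 : int)%:~R : R) = -3 by rewrite intrN.
  rewrite e3. have e1 : ((1:int)%:~R : R) = 1 by []. rewrite e1 in f2; lra.
rewrite ltr_int in a; rewrite ltr_int in b.
apply/andP; split; lia.
Qed.

Theorem theorem1 (R : realType) (L : nat) (hL : (0 < L)%N) :
  almost_surely (@toy_claim R L).
Proof.
pose N (t : 'I_L * 'I_L * 'I_9) : ('I_L -> R) -> Prop :=
  fun x => (t.1.1 != t.1.2) /\ ((forall i, -2^-1 < x i < 2^-1) /\
     \sum_q @coef R L t.1.1 t.1.2 q * x q = (((t.2 : nat)%:Z - 4)%:~R : R)).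
have HN : forall t, t \in enum [set: 'I_L * 'I_L * 'I_9] -> lebesgue_null (N t).
  move=> [[i j] u] _; rewrite /N /=; clear N.
  case: (eqVneq i j) => ij.
    refine (@null_sub R L _ _ _ (@null_empty R L hL)).
    by move=> x [].
  case: L hL i j ij => [//|n] hL i j ij.
  refine (@null_sub R _ _ _ _ (@hyper_null R _ hL (@coef R _ i j) i _ (coef_nz R ij))).
  move=> x [_ h]; exact: h.
refine (@null_sub R L _ _ _ (null_list hL HN)).
move=> alpha [cube nc].
have ninj : ~~ injectiveb (omega alpha).
  apply/negP => /injectiveP inj; apply: nc; exact: claim_det hL inj.
case/injectivePn: ninj => i [j ij e].
have lb : forall k, -2 < lapR alpha k < 2.
  move=> k; rewrite /lapR.
  have := cube (ord_pred k); have := cube k; have := cube (ordS k).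
  move=> /andP [a1 a2] /andP [b1 b2] /andP [c1 c2]; apply/andP; split; lra.
have ri := rnd_bnd (lb i); have rj := rnd_bnd (lb j).
have hu : (absz (rnd (lapR alpha i) - rnd (lapR alpha j) + 4)%R < 9)%N by lia.
exists (i, j, Ordinal hu); split; first by rewrite mem_enum in_setT.
split => //=; split => //.
rewrite coef_lin.
have -> : ((absz (rnd (lapR alpha i) - rnd (lapR alpha j) + 4)%R)%:Z - 4 =
    rnd (lapR alpha i) - rnd (lapR alpha j)) by lia.
move: e; rewrite /omega intrB => e; lra.
Qed.
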